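(* Let $X_1,X_2,\dots$ be iid real random variables with common continuous distribution function $F$, and suppose $F\in\mathcal{D}(G)$ with norming constants $a_n>0$, $b_n\in\mathbb{R}$. Then for every $x\in\mathbb{R}$ (at which $G$ is continuous), \[ \Pr\left(\frac{X_n-b_n}{a_n}\le x\ \Big|\ X_n\text{ is a record}\right)\to G(x),\qquad n\to\infty. \]
   Context: $X_m$ is a record if $X_m>\max(X_1,\dots,X_{m-1})$; $X_1$ is always a record. $F\in\mathcal{D}(G)$ (max-domain of attraction) means that there exist $a_n>0$, $b_n\in\mathbb{R}$ with $F^n(a_nx+b_n)\to G(x)$ as $n\to\infty$ at all continuity points $x$ of a non-degenerate distribution function $G$; then $G$ is a univariate extreme value distribution $G_\alpha(x)=\exp(-(1+\alpha x)^{-1/\alpha})$, $1+\alpha x>0$ (with $G_0(x)=\exp(-e^{-x})$), up to location and scale. *)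

(* Defs.v *)
From HB Require Import structures.
From mathcomp Require Import all_boot all_order all_algebra.
From mathcomp Require Import all_classical all_reals all_analysis.
Set Implicit Arguments. Unset Strict Implicit. Unset Printing Implicit Defensive.
Import Order.TTheory GRing.Theory Num.Theory.
Import numFieldNormedType.Exports.
Local Open Scope classical_set_scope.
Local Open Scope ring_scope.

(* The sequence X_1, X_2, ... is indexed by positive naturals; X 0 is ignored. *)

Definition mutually_independent_from1 d (T : measurableType d) (R : realType)
  (P : probability T R) (X : nat -> {RV P >-> R}) : Prop :=
  forall (s : seq nat), uniq s -> all (fun i => (0 < i)%N) s ->
  forall (B : nat -> set R), (forall i, measurable (B i)) ->
  P (\bigcap_(i in [set` s]) (X i @^-1` B i)) =
  \big[*%E/1%E]_(i <- s) P (X i @^-1` B i).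

Definition iid_with_df d (T : measurableType d) (R : realType)
  (P : probability T R) (X : nat -> {RV P >-> R}) (F : R -> R) : Prop :=
  mutually_independent_from1 X /\
  (forall n, (0 < n)%N -> forall x : R, cdf (X n) x = (F x)%:E).

Definition is_distribution_function (R : realType) (G : R -> R) : Prop :=
  {homo G : x y / x <= y} /\
  (forall x : R, G @ x^'+ --> G x) /\
  G @ -oo --> (0 : R) /\
  G @ +oo --> (1 : R).

Definition nondegenerate (R : realType) (G : R -> R) : Prop :=
  exists x : R, 0 < G x < 1.

Definition max_domain_of_attraction (R : realType) (F G : R -> R)
  (a b : nat -> R) : Prop :=
  (forall n, (0 < n)%N -> 0 < a n) /\
  is_distribution_function G /\ nondegenerate G /\
  (forall x : R, {for x, continuous G} ->
     (fun n => F (a n * x + b n) ^+ n) @ \oo --> G x).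

Definition is_record d (T : measurableType d) (R : realType)
  (P : probability T R) (X : nat -> {RV P >-> R}) (n : nat) : set T :=
  [set w | forall m, (0 < m < n)%N -> X m w < X n w].

Definition cond_prob d (T : measurableType d) (R : realType)
  (P : probability T R) (A B : set T) : R :=
  fine (P (A `&` B)) / fine (P B).

(* Main.v *)
Require Import Defs.
From HB Require Import structures.
From mathcomp Require Import all_boot all_order all_algebra.
From mathcomp Require Import all_classical all_reals all_analysis.
From mathcomp Require Import measurable_realfun ring lra.
Import Order.TTheory GRing.Theory Num.Theory.
Import numFieldNormedType.Exports.
Local Open Scope classical_set_scope.
Local Open Scope ring_scope.

Lemma powle (R : realType) (u v : R) n : 0 <= v <= u -> v ^+ n <= u ^+ n.
Proof. by case/andP=> v0 vu; apply: lerXn2r; rewrite // nnegrE (le_trans v0). Qed.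

Lemma alg (R : realType) (u v : R) k : 0 <= v <= u ->
  (u - v) * v ^+ k <= (u ^+ k.+1 - v ^+ k.+1) / k.+1%:R <= (u - v) * u ^+ k.
Proof.
move=> /[dup] vu /andP[v0 uv].
have u0 : 0 <= u by exact: le_trans uv.
have n0 : 0 < k.+1%:R :> R by rewrite ltr0n.
rewrite subrXX /= -mulrA; apply/andP; split; apply: ler_wpM2l; rewrite ?subr_ge0 //.
- rewrite ler_pdivlMr // mulr_natr.
  have -> : v ^+ k *+ k.+1 = \sum_(i < k.+1) v ^+ k by rewrite sumr_const card_ord.
  apply: ler_sum => i _.
  have ik : (i <= k)%N by rewrite -ltnS.
  rewrite -[X in v ^+ X <= _](subnK ik) exprD; apply: ler_wpM2r; first exact: exprn_ge0.
  exact: powle.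
- rewrite ler_pdivrMr // mulr_natr.
  have -> : u ^+ k *+ k.+1 = \sum_(i < k.+1) u ^+ k by rewrite sumr_const card_ord.
  apply: ler_sum => i _.
  have ik : (i <= k)%N by rewrite -ltnS.
  rewrite -[X in _ <= u ^+ X](subnK ik) exprD; apply: ler_wpM2l; first exact: exprn_ge0.
  exact: powle.
Qed.

Section S.
Context d (T : measurableType d) (R : realType) (P : probability T R)
  (X : nat -> {RV P >-> R}) (F : R -> R).
Hypothesis hiid : iid_with_df X F.

Lemma mXle m r : measurable [set w | X m w <= r].
Proof.
have -> : [set w | X m w <= r] = X m @^-1` `]-oo, r].
  by apply/seteqP; split=> w /=; rewrite in_itv.
exact: measurable_funPTI.
Qed.

Lemma mXlt m r : measurable [set w | r < X m w].
Proof.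
have -> : [set w | r < X m w] = X m @^-1` `]r, +oo[.
  by apply/seteqP; split=> w /=; rewrite in_itv /= andbT.
exact: measurable_funPTI.
Qed.

Lemma PXle m r : (0 < m)%N -> P [set w | X m w <= r] = (F r)%:E.
Proof.
move=> m0; rewrite -(hiid.2 m m0 r) /cdf /distribution /=.
by congr (P _); apply/seteqP; split=> w /=; rewrite in_itv.
Qed.

Lemma PfinE A : measurable A -> P A = (fine (P A))%:E.
Proof. by move=> mA; rewrite fineK // fin_num_measure. Qed.

Lemma F01 r : 0 <= F r <= 1.
Proof.
have h := @PXle 1 r (ltn0Sn 0).
apply/andP; split; rewrite -lee_fin -h.
  exact: measure_ge0.
exact: probability_le1 (mXle 1 r).
Qed.


Lemma iterE (x : R) k : iter k (GRing.mul x) 1 = x ^+ k.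
Proof. by elim: k => [|k IH] //=; rewrite IH exprS. Qed.

Lemma iterEe (x : R) k : iter k (fun y : \bar R => (x%:E * y)%E) 1%E = (x ^+ k)%:E.
Proof. by elim: k => [|k IH] //=; rewrite IH exprS. Qed.

Lemma indep k A r : measurable A ->
  P ([set w | A (X k.+1 w)] `&` [set w | forall m, (0<m<k.+1)%N -> X m w <= r]) =
  (P (X k.+1 @^-1` A) * ((F r)^+k)%:E)%E.
Proof.
move=> mA.
pose B i : set R := if i == k.+1 then A else [set x | x <= r].
have mB i : measurable (B i).
  rewrite /B; case: ifP => // _.
  have -> : [set x | x <= r] = `]-oo, r]%classic.
    by apply/seteqP; split => x /=; rewrite in_itv.
  exact: measurable_itv.
have pos : all (fun i => (0 < i)%N) (iota 1 k.+1).
  by apply/allP => i; rewrite mem_iota; case/andP.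
have := hiid.1 (iota 1 k.+1) (iota_uniq _ _) pos B mB.
have -> : \bigcap_(i in [set` iota 1 k.+1]) X i @^-1` B i =
   [set w | A (X k.+1 w)] `&` [set w | forall m, (0<m<k.+1)%N -> X m w <= r].
  apply/seteqP; split=> w.
    move=> h; split.
      have := h k.+1; rewrite /B eqxx; apply.
      have hk : k.+1 \in iota 1 k.+1 by rewrite mem_iota add1n ltnSn.
      exact: hk.
    move=> m /andP[m0 mk]; have := h m; rewrite /B (ltn_eqF mk); apply.
    have hk : m \in iota 1 k.+1 by rewrite mem_iota m0 add1n ltnS ltnW.
    exact: hk.
  move=> [hA hr] i hi; have : i \in iota 1 k.+1 by exact: hi.
  rewrite mem_iota add1n ltnS => /andP[i0 ik].
  rewrite /B /preimage /=; case: eqP => [->//|/eqP ne] /=.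
  by apply: hr; rewrite i0 ltn_neqAle ne ik.
move=> ->.
rewrite -(addn1 k) iotaD big_cat /= big_seq1 /B eqxx muleC; congr (_ * _)%E.
  by rewrite addnC.
rewrite (eq_big_seq (fun=> (F r)%:E)); last first.
  move=> i; rewrite mem_iota add1n => /andP[i0 ik]; rewrite (ltn_eqF ik) -(@PXle i r) //.
by rewrite big_const_seq count_predT size_iota iterEe.
Qed.


Definition Ev k s := [set w | X k.+1 w <= s] `&` is_record X k.+1.

Lemma mRec k : measurable (is_record X k.+1).
Proof.
have -> : is_record X k.+1 =
    \bigcap_(m in [set m | (m < k.+1)%N]) [set w | (0 < m)%N -> X m w < X k.+1 w].
  apply/seteqP; split => w /=.
    by move=> h m /= mk m0; apply: h; rewrite m0 mk.
  by move=> h m /andP[m0 mk]; exact: h.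
apply: bigcap_measurable; first by exists 0%N.
move=> m _; case: (posnP m) => [->|m0].
  by have -> : [set w | (0 < 0)%N -> X 0 w < X k.+1 w] = setT
    by apply/seteqP; split.
have -> : [set w | true -> X m w < X k.+1 w] =
   [set: T] `&` (fun w => X m w < X k.+1 w) @^-1` [set true].
  by apply/seteqP; split => w /=; [move=> h; split=> //; exact: h|case=> _ ->].
apply: (@measurable_fun_ltr _ _ _ setT (X m) (X k.+1)) => //; exact: measurable_funPT.
Qed.

Lemma mEv k s : measurable (Ev k s).
Proof. exact: measurableI (mXle _ _) (mRec k). Qed.

Lemma mLow k r : measurable [set w | forall m, (0<m<k.+1)%N -> X m w <= r].
Proof.
have -> : [set w | forall m, (0<m<k.+1)%N -> X m w <= r] =
    \bigcap_(m in [set m | (m < k.+1)%N]) [set w | (0 < m)%N -> X m w <= r].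
  apply/seteqP; split => w /=.
    by move=> h m /= mk m0; apply: h; rewrite m0 mk.
  by move=> h m /andP[m0 mk]; exact: h.
apply: bigcap_measurable; first by exists 0%N.
move=> m _; case: (posnP m) => [->|m0].
  by have -> : [set w | (0 < 0)%N -> X 0 w <= r] = setT
    by apply/seteqP; split.
have -> : [set w | true -> X m w <= r] = [set w | X m w <= r].
  by apply/seteqP; split => w /= h //; exact: h.
exact: mXle.
Qed.

Lemma mitv (a b : R) : measurable [set x : R | a < x <= b].
Proof.
have -> : [set x : R | a < x <= b] = `]a, b]%classic.
  by apply/seteqP; split => x /=; rewrite in_itv.
exact: measurable_itv.
Qed.

Lemma Pband m a b : (0 < m)%N -> a <= b ->
  P (X m @^-1` [set x | a < x <= b]) = (F b - F a)%:E.
Proof.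
move=> m0 ab.
have mb : measurable (X m @^-1` [set x | a < x <= b]) by exact: measurable_funPTI (mitv a b).
have : P [set w | (X m w <= b)%R] = (P [set w | (X m w <= a)%R] + P (X m @^-1` [set x | (a < x <= b)%R]))%E.
  rewrite -measureU //; [|exact: mXle|].
    congr (P _); apply/seteqP; split => w /=.
      by case: (leP (X m w) a) => h hb; [left|right; apply/andP].
    by case => [h|/andP[_ h]] //; exact: le_trans h ab.
  by apply/seteqP; split => w //= [h /andP[h' _]]; move: h'; rewrite ltNge h.
rewrite !PXle // (PfinE _ mb) -EFinD => h; congr (_%:E).
have h2 : F b = F a + fine (P (X m @^-1` [set x | a < x <= b])) by case: h.
by rewrite h2 addrC addKr.
Qed.


Definition Low k r := [set w | forall m, (0<m<k.+1)%N -> X m w <= r].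

Lemma PC k a b r : a <= b ->
  P ([set w | [set x | a < x <= b] (X k.+1 w)] `&` Low k r) =
  ((F b - F a) * F r ^+ k)%:E.
Proof.
move=> ab; rewrite /Low indep; last exact: mitv.
by rewrite Pband.
Qed.

Lemma Ev_lower k a b : a <= b ->
  (P (Ev k a) + ((F b - F a) * F a ^+ k)%:E <= P (Ev k b))%E.
Proof.
move=> ab; rewrite -(PC k a b a ab) -measureU; first last.
- apply/seteqP; split => w //= [[ha _] [/andP[ha' _] _]].
  by move: ha'; rewrite ltNge ha.
- by apply: measurableI; [exact: measurable_funPTI (mitv a b)|exact: mLow].
- exact: mEv.
apply: le_measure; rewrite ?inE.
- by apply: measurableU; [exact: mEv|apply: measurableI;
    [exact: measurable_funPTI (mitv a b)|exact: mLow]].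
- exact: mEv.
move=> w [[ha hr]|[/andP[ha hb] hl]]; split => //=.
- exact: le_trans ha ab.
- by move=> m hm; exact: le_lt_trans (hl m hm) ha.
Qed.

Lemma Ev_upper k a b : a <= b ->
  (P (Ev k b) <= P (Ev k a) + ((F b - F a) * F b ^+ k)%:E)%E.
Proof.
move=> ab; rewrite -(PC k a b b ab).
have mC : measurable ([set w | [set x | a < x <= b] (X k.+1 w)] `&` Low k b).
  by apply: measurableI; [exact: measurable_funPTI (mitv a b)|exact: mLow].
apply: le_trans (measureU2 _ (mEv k a) mC).
apply: le_measure; rewrite ?inE.
- exact: mEv.
- exact: measurableU (mEv k a) mC.
move=> w [hb hr]; case: (leP (X k.+1 w) a) => ha; [left|right] => //.
split; first by rewrite /= ha hb.
by move=> m hm; apply: ltW; apply: lt_le_trans (hr m hm) hb.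
Qed.

Lemma Ev_top k b : (P (Ev k b) <= (F b ^+ k.+1)%:E)%E.
Proof.
have := @indep k [set x | x <= b] b.
have mA : measurable [set x : R | x <= b].
  have -> : [set x : R | x <= b] = `]-oo, b]%classic.
    by apply/seteqP; split => x /=; rewrite in_itv.
  exact: measurable_itv.
move=> /(_ mA) h.
have -> : (F b ^+ k.+1)%:E = P ([set w | [set x | x <= b] (X k.+1 w)] `&` Low k b).
  rewrite /Low h exprS EFinM; congr (_ * _)%E.
  rewrite -(@PXle k.+1 b) //.
apply: le_measure; rewrite ?inE.
- exact: mEv.
- exact: measurableI (mXle _ _) (mLow _ _).
move=> w [hb hr]; split => //.
by move=> m hm; apply: ltW; apply: lt_le_trans (hr m hm) hb.
Qed.


Lemma Fmono a b : a <= b -> F a <= F b.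
Proof.
move=> ab; rewrite -subr_ge0 -lee_fin -(@Pband 1 a b) //; exact: measure_ge0.
Qed.

Lemma cdf1E : fine \o cdf (X 1) = F.
Proof. by apply/funext => x /=; rewrite (hiid.2 1 (ltn0Sn 0) x). Qed.

Lemma F_small v : 0 < v -> exists y, F y < v.
Proof.
move=> v0.
have h : F x @[x --> -oo] --> 0.
  rewrite -cdf1E; apply: fine_cvg; exact: cvg_cdfNy0.
have hh : \forall t \near -oo, F t < v :=
  @cvgr_lt _ _ _ (@filter_filter _ _ proper_ninfty_nbhs) _ _ h _ v0.
have [y hy] := filter_ex hh; by exists y.
Qed.

Lemma F_big e : 0 < e -> exists y, 1 - e < F y.
Proof.
move=> e0.
have h : F x @[x --> +oo] --> (1:R).
  rewrite -cdf1E; apply: fine_cvg; exact: cvg_cdfy1.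
have : 1 - e < 1 by rewrite ltrBlDr ltrDl.
move=> he; have hh : \forall t \near +oo, 1 - e < F t := @cvgr_gt _ _ _ (@filter_filter _ _ proper_pinfty_nbhs) _ _ h _ he.
have [y hy] := filter_ex hh; by exists y.
Qed.


Definition p k s := fine (P (Ev k s)).
Definition g k s := p k s - F s ^+ k.+1 / k.+1%:R.

Lemma PEv k s : P (Ev k s) = (p k s)%:E.
Proof. exact: PfinE (mEv k s). Qed.

Lemma p_lower k a b : a <= b -> p k a + (F b - F a) * F a ^+ k <= p k b.
Proof. by move=> ab; have := Ev_lower k a b ab; rewrite !PEv -EFinD lee_fin. Qed.

Lemma p_upper k a b : a <= b -> p k b <= p k a + (F b - F a) * F b ^+ k.
Proof. by move=> ab; have := Ev_upper k a b ab; rewrite !PEv -EFinD lee_fin. Qed.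

Lemma p_top k b : 0 <= p k b <= F b ^+ k.+1.
Proof.
apply/andP; split; first by rewrite -lee_fin -PEv; exact: measure_ge0.
by rewrite -lee_fin -PEv; exact: Ev_top.
Qed.

Lemma sandwich (D1 D2 L U : R) : L <= D1 <= U -> L <= D2 <= U -> `|D1 - D2| <= U - L.
Proof. move=> /andP[? ?] /andP[? ?]; rewrite ler_norml; apply/andP; split; lra. Qed.

Lemma g_step k a b : a <= b ->
  `|g k b - g k a| <= (F b - F a) * (F b ^+ k - F a ^+ k).
Proof.
move=> ab; have l := p_lower k a b ab; have u := p_upper k a b ab.
have := @alg R (F b) (F a) k (introT andP (conj (proj1 (andP (F01 a))) (Fmono a b ab))).
set x := (F b ^+ k.+1 - F a ^+ k.+1) / k.+1%:R => hx.
have -> : g k b - g k a = (p k b - p k a) - x by rewrite /g /x; ring.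
have -> : (F b - F a) * (F b ^+ k - F a ^+ k) =
   (F b - F a) * F b ^+ k - (F b - F a) * F a ^+ k by ring.
apply: sandwich => //; apply/andP; split; lra.
Qed.


Lemma g_base k b : `|g k b| <= F b.
Proof.
have /andP[F0 F1] := F01 b.
have /andP[p0 p1] := p_top k b.
have Fk : F b ^+ k.+1 <= F b.
  by rewrite exprS ler_piMr // exprn_ile1.
have n0 : 0 < k.+1%:R :> R by rewrite ltr0n.
have q0 : 0 <= F b ^+ k.+1 / k.+1%:R by rewrite divr_ge0 // exprn_ge0.
have q1 : F b ^+ k.+1 / k.+1%:R <= F b ^+ k.+1.
  by rewrite ler_pdivrMr // ler_peMr ?exprn_ge0 // ler1n.
apply: le_trans Fk; rewrite -[X in _ <= X]subr0.
by apply: sandwich; rewrite ?p0 ?p1 ?q0 ?q1.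
Qed.

Hypothesis Fcont : continuous F.

Lemma level v s : 0 < v <= F s -> exists s', s' <= s /\ F s' = v.
Proof.
move=> /andP[v0 vs]; have [y hy] := F_small v v0.
pose y' := Num.min y s.
have y's : y' <= s by rewrite /y' ge_min lexx orbT.
have Fy' : F y' <= v.
  by apply: le_trans (ltW hy); apply: Fmono; rewrite /y' ge_min lexx.
have := @IVT R F y' s v y's (continuous_subspaceT Fcont).
rewrite (min_idPl (Fmono y' s y's)) (max_idPr (Fmono y' s y's)) Fy' vs.
case=> // c; rewrite in_itv /= => /andP[_ cs] Fc; by exists c.
Qed.


Lemma grid k t N : 0 < F t -> (0 < N)%N -> forall j, (0 < j <= N)%N ->
  forall s, F s = F t * j%:R / N%:R ->
  `|g k s| <= F t / N%:R * (1 + (F t * j%:R / N%:R) ^+ k).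
Proof.
move=> c0 N0; set c := F t.
have Npos : 0 < N%:R :> R by rewrite ltr0n.
have cN0 : 0 <= c / N%:R by rewrite divr_ge0 // ltW.
elim=> [|j IH] //.
move=> /andP[_ jN] s Fs.
case: j IH jN Fs => [|j] IH jN Fs.
  apply: le_trans (g_base k s) _; rewrite Fs mulr1 ler_peMr //.
  by rewrite lerDl exprn_ge0 // mulr_ge0 // ?divr_ge0 ?ler0n // ltW.
set u := c * j.+1%:R / N%:R.
have u0 : 0 < u by rewrite /u divr_gt0 // mulr_gt0 // ltr0n.
have uFs : u <= F s.
  by rewrite Fs /u ler_pM2r ?invr_gt0 // ler_pM2l // ler_nat.
have [s' [s's Fs']] := level u s (introT andP (conj u0 uFs)).
have IH' := IH (introT andP (conj (ltn0Sn j) (ltnW jN))) s' Fs'.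
have st := g_step k s' s s's.
have dF : F s - F s' = c / N%:R.
  rewrite Fs Fs' /u -[j.+2]addn1 natrD; field.
  by rewrite lt0r_neq0.
rewrite dF Fs Fs' /u in st.
have tri : `|g k s| <= `|g k s'| + `|g k s - g k s'|.
  by have := ler_normD (g k s') (g k s - g k s'); rewrite addrC subrK.
move: tri IH' st; set A := `|g k s|; set B := `|g k s'|; set C := `|g k s - g k s'|.
set a1 := (c * j.+2%:R / N%:R) ^+ k; set a0 := (c * j.+1%:R / N%:R) ^+ k.
set e := c / N%:R.
rewrite mulrBr mulrDr mulr1 => ? ? ?; lra.
Qed.


Lemma zero_of_small (x : R) : (forall e, 0 < e -> `|x| < e) -> x = 0.
Proof.
move=> h; apply/eqP; rewrite -normr_le0; rewrite leNgt; apply/negP => x0.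
by have := h _ x0; rewrite ltxx.
Qed.

Lemma p_exact k t : p k t = F t ^+ k.+1 / k.+1%:R.
Proof.
apply/eqP; rewrite -subr_eq0; apply/eqP; rewrite -/(g k t).
have /andP[F0 F1] := F01 t.
have [ct|ct] := eqVneq (F t) 0.
  by apply/eqP; rewrite -normr_le0 -ct g_base.
have c0 : 0 < F t by rewrite lt0r ct.
apply: zero_of_small => e e0.
pose N := (Num.truncn (2 / e)).+1.
have N0 : (0 < N)%N by [].
have Npos : 0 < N%:R :> R by rewrite ltr0n.
have hN : 2 / e < N%:R by exact: truncnS_gt.
have := grid k t N c0 N0 N (introT andP (conj N0 (leqnn N))) t.
rewrite mulfK ?lt0r_neq0 // => /(_ erefl) h.
apply: le_lt_trans h _.
have ck : F t ^+ k <= 1 by rewrite exprn_ile1.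
have : F t / N%:R * (1 + F t ^+ k) <= 2 / N%:R.
  rewrite mulrAC ler_pM2r ?invr_gt0 //.
  by rewrite -[2]/(1 + 1 : R) mulrDr mulr1 lerD // mulr_ile1 ?exprn_ge0.
move/le_lt_trans; apply.
by rewrite ltr_pdivrMr // mulrC -ltr_pdivrMr.
Qed.

Definition q k := fine (P (is_record X k.+1)).

Lemma q_bounds k t : p k t <= q k <= p k t + (1 - F t).
Proof.
have mR := mRec k.
apply/andP; split.
  rewrite -lee_fin -PEv /q -PfinE //; apply: le_measure; rewrite ?inE //.
    exact: mEv.
  by move=> w [].
have mlt : measurable [set w | t < X k.+1 w] by exact: mXlt.
have Plt : P [set w | t < X k.+1 w] = (1 - F t)%:E.
  have : P setT = (P [set w | (X k.+1 w <= t)%R] + P [set w | (t < X k.+1 w)%R])%E.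
    rewrite -measureU //; [|exact: mXle|].
      by congr (P _); apply/seteqP; split => w // _ /=; case: (leP (X k.+1 w) t) => h;
        [left|right].
    by apply/seteqP; split => w // [/= h1 h2]; move: h2; rewrite ltNge h1.
  rewrite probability_setT PXle // (PfinE _ mlt) -EFinD => h.
  have h2 : 1 = F t + fine (P [set w | t < X k.+1 w]) by case: h.
  by rewrite (PfinE _ mlt) h2 addrC addKr.
rewrite -lee_fin EFinD -PEv -Plt /q -PfinE //.
apply: le_trans (measureU2 _ (mEv k t) mlt).
apply: le_measure; rewrite ?inE //.
  exact: measurableU (mEv k t) mlt.
move=> w hw; case: (leP (X k.+1 w) t) => h; [left|right] => //.
Qed.

Lemma q_exact k : q k = 1 / k.+1%:R.
Proof.
apply/eqP; rewrite -subr_eq0; apply/eqP; apply: zero_of_small => e e0.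
have [t ht] := F_big e e0.
have /andP[F0 F1] := F01 t.
have /andP[l u] := q_bounds k t.
have := @alg R 1 (F t) k (introT andP (conj F0 F1)).
rewrite !expr1n mulr1 !p_exact in l u * => /andP[_ a2].
have n0 : 0 < k.+1%:R :> R by rewrite ltr0n.
have b1 : F t ^+ k.+1 / k.+1%:R <= 1 / k.+1%:R.
  by rewrite ler_pM2r ?invr_gt0 // exprn_ile1.
move: a2; rewrite mulrBl => a2.
move: ht l u b1 a2; set A := F t ^+ k.+1 / k.+1%:R; set B := 1 / k.+1%:R; set Q := q k; set f := F t => ? ? ? ? ?.
rewrite ltr_norml; apply/andP; split; lra.
Qed.

End S.

Theorem lemma7 (d : measure_display) (T : measurableType d) (R : realType)
  (P : probability T R) (X : nat -> {RV P >-> R}) (F G : R -> R)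
  (a b : nat -> R) :
  iid_with_df X F ->
  continuous F ->
  max_domain_of_attraction F G a b ->
  forall x : R, {for x, continuous G} ->
  (fun n => cond_prob P [set w | (X n w - b n) / a n <= x] (is_record X n))
    @ \oo --> G x.
Proof.
move=> hiid Fc [a0 [_ [_ hconv]]] x Gx.
have h := hconv x Gx.
have E n : cond_prob P [set w | (X n.+1 w - b n.+1) / a n.+1 <= x] (is_record X n.+1)
    = F (a n.+1 * x + b n.+1) ^+ n.+1.
  have an : 0 < a n.+1 by exact: a0.
  rewrite /cond_prob.
  have -> : [set w | (X n.+1 w - b n.+1) / a n.+1 <= x] `&` is_record X n.+1
      = @Ev _ _ _ P X n (a n.+1 * x + b n.+1).
    apply/seteqP; split => w [h1 h2]; split => //=; move: h1 => /=.
      by rewrite ler_pdivrMr // lerBlDr mulrC.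
    by rewrite ler_pdivrMr // lerBlDr mulrC.
  have hp := @p_exact _ _ _ P X F hiid Fc n (a n.+1 * x + b n.+1).
  have hq := @q_exact _ _ _ P X F hiid Fc n.
  rewrite /p in hp; rewrite /q in hq; rewrite hp hq.
  field; by rewrite lt0r_neq0 // ltr0n.
apply: (@cvg_trans _ ((fun n => F (a n * x + b n) ^+ n) @ \oo)); last exact: h.
apply: near_eq_cvg; exists 1%N => // -[|n] //= _.
Qed.
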